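(* Let $d\ge 2$ and let the weights $(J_y)_{y\in\Sigma_n}$ on $\mathbb T_n^d$ be i.i.d. with a good distribution and $\mathbb E|J_y|^{4+\delta}<\infty$ for some $\delta>0$. Let $x\in\Sigma_n$ and let $J'_x$ be an independent copy of $J_x$, independent of all the weights. Then there is $c_1>0$, not depending on $n$, such that $\mathbb P(\max\{J_x,J'_x\}<K_{n,x})>c_1$ for all $n\ge3$.
   Context: $\mathbb T_n^d=(\mathbb Z/n\mathbb Z)^d$ with nearest-neighbour edges; $\Sigma_n$ is its set of vertices and edges. A matching is a set $M\subset\Sigma_n$ such that every vertex either belongs to $M$ or is an endpoint of exactly one edge of $M$, but not both; $H(M)=\sum_{y\in M}J_y$. $M_{n,x,1}$ (resp. $M_{n,x,0}$) is the minimal-weight matching among those containing $x$ (resp. not containing $x$), and the transition point is $K_{n,x}=H(M_{n,x,0})-H(M_{n,x,1})+J_x$ (a function of $(J_y)_{y\ne x}$). A good distribution: values in $[\beta,\infty)$, $\beta\in\{-\infty\}\cup\mathbb R$, continuous density $p$ with $p>0$ on $(\beta,\infty)$, and for some $\alpha>1$, $\int_\beta^\infty(p(x-z)/p(x))^\alpha p(x)\,dx$ finite and continuous in $z>0$. *)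

(* Defs.v *)
From HB Require Import structures.
From mathcomp Require Import all_boot all_order all_algebra.
From mathcomp Require Import all_classical all_reals all_analysis.
Set Implicit Arguments. Unset Strict Implicit. Unset Printing Implicit Defensive.
Import Order.TTheory GRing.Theory Num.Theory.
Import numFieldNormedType.Exports.
Local Open Scope classical_set_scope.
Local Open Scope ring_scope.

Section Torus.
Variables (n d : nat).

Definition vtx := {ffun 'I_d -> 'I_n}.

Definition adjb (u v : vtx) : bool :=
  [exists i : 'I_d,
     ((val (v i) == (val (u i)).+1 %% n)%N || (val (u i) == (val (v i)).+1 %% n)%N)
     && [forall j : 'I_d, (j != i) ==> (u j == v j)]].

(* an element of Sigma_n: a vertex {v} or an edge {u,v} *)
Definition site_or_edge (A : {set vtx}) : bool :=
  (#|A| == 1)%N ||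
  [exists u : vtx, exists v : vtx, (A == [set u; v]%SET) && adjb u v].

Definition Sigma := {A : {set vtx} | site_or_edge A}.

Definition is_matching (M : {set Sigma}) : bool :=
  [forall v : vtx, #|[set y in M | v \in val y]%SET| == 1%N].

Variable R : realType.

Definition Hw (w : Sigma -> R) (M : {set Sigma}) : R := \sum_(y in M) w y.

Definition minH (x : Sigma) (b : bool) (w : Sigma -> R) : R :=
  fine (\big[Order.min/+oo%E]_(M : {set Sigma} | is_matching M && ((x \in M) == b))
          (Hw w M)%:E).

Definition Ktrans (x : Sigma) (w : Sigma -> R) : R :=
  minH x false w - minH x true w + w x.

End Torus.

Definition good_density (R : realType) (beta : \bar R) (alpha : R) (p : R -> R) : Prop :=
  beta != +oo%E /\
  (forall x, 0 <= p x) /\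
  (forall x, (x%:E < beta)%E -> p x = 0) /\
  (forall x, (beta < x%:E)%E -> 0 < p x) /\
  {within [set x : R | (beta < x%:E)%E], continuous p} /\
  1 < alpha /\
  let F := fun z : R =>
    (\int[@lebesgue_measure R]_(x in [set x : R | (beta < x%:E)%E])
        ((p (x - z) / p x) `^ alpha * p x)%:E)%E in
  (forall z : R, 0 < z -> (F z < +oo)%E) /\
  {within [set z : R | 0 < z], continuous (fun z => fine (F z))}.

Definition has_density (R : realType) (dT : measure_display) (T : measurableType dT)
  (P : probability T R) (X : T -> R) (p : R -> R) : Prop :=
  forall B : set R, measurable B ->
    P (X @^-1` B) = (\int[@lebesgue_measure R]_(x in B) (p x)%:E)%E.

Definition mutually_independent (R : realType) (dT : measure_display) (T : measurableType dT)
  (P : probability T R) (I : finType) (X : I -> T -> R) : Prop :=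
  forall B : I -> set R, (forall i, measurable (B i)) ->
    fine (P (\bigcap_(i in [set: I]) (X i @^-1` B i))) =
    \prod_(i : I) fine (P (X i @^-1` B i)).

(* Main.v *)
Require Import Defs.
From HB Require Import structures.
From mathcomp Require Import all_boot all_order all_algebra.
From mathcomp Require Import all_classical all_reals all_analysis.
From mathcomp Require Import zify ring lra measurable_realfun.
Import Order.TTheory GRing.Theory Num.Theory.
Import numFieldNormedType.Exports.
Local Open Scope classical_set_scope.
Local Open Scope ring_scope.
Set Implicit Arguments. Unset Strict Implicit. Unset Printing Implicit Defensive.

Section Comb.
Local Close Scope classical_set_scope.
Variables (n d : nat).
Local Notation vtx := (vtx n d).
Local Notation Sigma := (Sigma n d).

Lemma sing_proof (z : vtx) : site_or_edge [set z]%SET.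
Proof. by rewrite /site_or_edge cards1. Qed.

Definition sing (z : vtx) : Sigma := exist _ [set z]%SET (sing_proof z).

Lemma sing_inj : injective sing.
Proof. by move=> a b /(congr1 val) /= /set1_inj. Qed.

Lemma site_card (y : Sigma) : (0 < #|val y| <= 2)%N.
Proof.
case: y => A /= /orP [/eqP -> //|/existsP [u /existsP [v /andP [/eqP -> _]]]].
rewrite cards2; by case: (u != v).
Qed.

Lemma adjb_sym (u v : vtx) : adjb u v = adjb v u.
Proof.
rewrite /adjb; apply/existsP/existsP => -[i /andP [h1 /forallP h2]]; exists i;
  rewrite orbC h1 /=; apply/forallP => j; by case: (j != i) (h2 j) => //= /eqP ->.
Qed.


Lemma cover (M : {set Sigma}) : is_matching M ->
  forall z, exists y0, [/\ y0 \in M, z \in val y0 &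
     forall y, y \in M -> z \in val y -> y = y0].
Proof.
move=> /forallP hM z; have /cards1P [y0 hy0] := hM z.
have : y0 \in [set y in M | z \in val y] by rewrite hy0 set11.
rewrite inE => /andP [h1 h2]; exists y0; split => // y yM zy.
have : y \in [set y in M | z \in val y] by rewrite inE yM.
by rewrite hy0 inE => /eqP.
Qed.

Lemma sing_val z : val (sing z) = [set z]%SET. Proof. by []. Qed.

Variable x : Sigma.
Definition touches (y : Sigma) := ~~ [disjoint val y & val x]%SET.

Lemma touchesP (y : Sigma) : reflect (exists2 z, z \in val y & z \in val x) (touches y).
Proof.
rewrite /touches -setI_eq0; apply: (iffP (set0Pn _)).
  by move=> [z]; rewrite inE => /andP [] ; exists z.
by move=> [z h1 h2]; exists z; rewrite inE h1.
Qed.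

Definition S0 (M : {set Sigma}) := [set y in M | touches y].
Definition U0 (M : {set Sigma}) := ((\bigcup_(s in S0 M) val s) :\: val x)%SET.
Definition M1 (M : {set Sigma}) := locked ((M :\: S0 M) :|: (x |: (sing @: U0 M)))%SET.

Lemma in_M1 (M : {set Sigma}) (y : Sigma) : (y \in M1 M) =
  [|| (y \in M) && ~~ touches y, y == x | [exists z, (z \in U0 M) && (y == sing z)]].
Proof.
rewrite /M1 -lock !inE /S0 ?inE; congr (_ || (_ || _)).
  by case: (y \in M); rewrite ?andbF ?andbT.
apply/imsetP/existsP => [[z h ->]|[z /andP [h /eqP ->]]]; exists z => //.
by rewrite h eqxx.
Qed.

Lemma M1_matching (M : {set Sigma}) : is_matching M -> x \notin M -> is_matching (M1 M).
Proof.
move=> hM xM; apply/forallP => z; apply/cards1P.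
have [y0 [y0M zy0 uy0]] := cover hM z.
have [zx|zx] := boolP (z \in val x).
  exists x; apply/setP => y; rewrite !inE in_M1.
  apply/idP/idP => [/andP [/or3P [/andP [yM /touchesP ty]|//|/existsP [u /andP [hu /eqP ->]]] zy]|/eqP ->].
  - by case: ty; exists z.
  - move: zy hu; rewrite sing_val inE => /eqP <-; rewrite /U0 inE zx //.
  - by rewrite eqxx zx orbT.
have [zU|zU] := boolP (z \in U0 M).
  exists (sing z); apply/setP => y; rewrite !inE in_M1.
  apply/idP/idP => [/andP [/or3P [/andP [yM /touchesP ty]|/eqP ->|/existsP [u /andP [hu /eqP ->]]] zy]|/eqP ->].
  - move: zU; rewrite /U0 !inE => /andP [_ /bigcupP [s]].
    rewrite /S0 inE => /andP [sM ts] zs.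
    have e1 := uy0 _ sM zs; have e2 := uy0 _ yM zy.
    by case: ty; move/touchesP: ts => [w h1 h2]; exists w => //; rewrite e2 -e1.
  - by rewrite zy in zx.
  - by move: zy; rewrite sing_val inE => /eqP ->.
  - rewrite sing_val inE eqxx andbT; apply/orP; right; apply/orP; right.
    by apply/existsP; exists z; rewrite zU eqxx.
exists y0; apply/setP => y; rewrite !inE in_M1.
apply/idP/idP => [/andP [/or3P [/andP [yM _]|/eqP ->|/existsP [u /andP [hu /eqP ->]]] zy]|/eqP ->].
- by rewrite (uy0 _ yM zy).
- by rewrite zy in zx.
- by move: zy hu; rewrite sing_val inE => /eqP <-; rewrite (negbTE zU).
- rewrite zy0 andbT y0M /=.
  have [ty|//] := boolP (touches y0).
  move: zU; rewrite /U0 !inE zx /=; move/negP; case; apply/bigcupP.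
  by exists y0 => //; rewrite /S0 inE y0M.
Qed.


Lemma touches_x : touches x.
Proof.
have := site_card x; case/andP => /card_gt0P [z hz] _.
by apply/touchesP; exists z.
Qed.

Lemma M1_disj (M : {set Sigma}) : is_matching M ->
  [disjoint (M :\: S0 M) & (x |: (sing @: U0 M))]%SET.
Proof.
move=> hM; rewrite -setI_eq0; apply/eqP/setP => y; rewrite !inE.
apply/negbTE; apply/negP => /andP [/andP [hS yM] /orP [/eqP eyx|/imsetP [z zU ey]]].
  by move: hS; rewrite eyx in yM *; rewrite yM touches_x.
move: zU; rewrite /U0 !inE => /andP [zx /bigcupP [s]].
rewrite /S0 inE => /andP [sM ts] zs.
have [y0 [_ _ u]] := cover hM z.
have e1 := u _ sM zs; have : z \in val y by rewrite ey sing_val set11.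
move=> /(u _ yM) e2.
by move: hS; rewrite yM /= e2 -e1 ts.
Qed.

Lemma x_notin_sing (M : {set Sigma}) : x \notin (sing @: U0 M)%SET.
Proof.
apply/imsetP => -[z]; rewrite /U0 !inE => /andP [zx _] ex.
by move: zx; rewrite ex sing_val set11.
Qed.

Lemma S0_sub (M : {set Sigma}) : (S0 M \subset M)%SET.
Proof. by apply/fintype.subsetP => y; rewrite /S0 inE => /andP []. Qed.

Section W.
Variable R : realType.
Variable w : Sigma -> R.

Lemma Hw_M1 (M : {set Sigma}) : is_matching M ->
  Hw w (M1 M) = Hw w M - \sum_(y in S0 M) w y + w x + \sum_(z in U0 M) w (sing z).
Proof.
move=> hM; rewrite /Hw /M1 -lock; under eq_bigl do rewrite finset.in_setU; rewrite bigU /=; last exact: M1_disj.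
rewrite big_setU1 ?x_notin_sing //= big_imset /=; last by move=> a b _ _; exact: sing_inj.
rewrite (big_setID (S0 M) (A := M)) /= (finset.setIidPr (S0_sub M)).
rewrite /=; lra.
Qed.
End W.

Definition small (y : Sigma) :=
  [&& y != x, ~~ touches y & [exists s, [&& s != x, touches s & (val y \subset val s)]]].

Lemma U0_small (M : {set Sigma}) z : x \notin M -> z \in U0 M -> small (sing z).
Proof.
move=> xM; rewrite /U0 !inE => /andP [zx /bigcupP [s]].
rewrite /S0 inE => /andP [sM ts] zs.
have nt : ~~ touches (sing z).
  by apply/touchesP => -[v]; rewrite sing_val inE => /eqP ->; rewrite (negbTE zx).
apply/and3P; split => //.
  by apply/eqP => e; move: nt; rewrite e touches_x.
apply/existsP; exists s; rewrite ts sing_val finset.sub1set zs !andbT.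
by apply/eqP => e; move: xM; rewrite -e sM.
Qed.

Lemma card_bigcup_le (I T : finType) (A : {pred I}) (F : I -> {set T}) :
  (#|\bigcup_(i in A) F i| <= \sum_(i in A) #|F i|)%N.
Proof.
apply: (big_ind2 (fun (S : {set T}) (m : nat) => #|S| <= m)%N) => //.
  by rewrite cards0.
move=> S1 m1 S2 m2 h1 h2; apply: leq_trans (leq_card_setU S1 S2) _.
exact: leq_add.
Qed.

Lemma card_U0 (M : {set Sigma}) : (#|U0 M| <= #|S0 M|)%N.
Proof.
apply: (@leq_trans (#|\bigcup_(s in S0 M) (val s :\: val x)|)).
  apply: subset_leq_card; apply/fintype.subsetP => z.
  rewrite /U0 !inE => /andP [zx /bigcupP [s sS zs]].
  by apply/bigcupP; exists s => //; rewrite !inE zx.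
apply: leq_trans (card_bigcup_le _ _) _.
rewrite -sum1_card; apply: leq_sum => s; rewrite /S0 inE => /andP [_ /touchesP [z z1 z2]].
rewrite cardsD; have := site_card s; case/andP => _ h2.
have : (0 < #|val s :&: val x|)%N by apply/card_gt0P; exists z; rewrite !inE z1.
move=> hh; rewrite leq_subLR; apply: (leq_trans h2); by rewrite addn1 ltnS.
Qed.

Lemma S0_nonempty (M : {set Sigma}) : is_matching M -> (0 < #|S0 M|)%N.
Proof.
move=> hM; have := site_card x; case/andP => /card_gt0P [z zx] _.
have [y0 [y0M zy0 _]] := cover hM z.
apply/card_gt0P; exists y0; rewrite /S0 inE y0M /=.
by apply/touchesP; exists z.
Qed.

Section W2.
Variable R : realType.
Variable w : Sigma -> R.

Lemma gain (M : {set Sigma}) (a1 c : R) : is_matching M -> x \notin M ->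
  (forall y, y != x -> touches y -> a1 <= w y) ->
  (forall y, small y -> w y <= c) -> 0 <= c -> 2 * c <= a1 ->
  c <= \sum_(y in S0 M) w y - \sum_(z in U0 M) w (sing z).
Proof.
move=> hM xM hl hs c0 ca.
have h1 : a1 * (#|S0 M|)%:R <= \sum_(y in S0 M) w y.
  rewrite mulr_natr -sumr_const; apply: ler_sum => y; rewrite /S0 inE => /andP [yM ty].
  by apply: hl => //; apply/eqP => e; move: xM; rewrite -e yM.
have h2 : \sum_(z in U0 M) w (sing z) <= c * (#|U0 M|)%:R.
  rewrite mulr_natr -sumr_const; apply: ler_sum => z zU; apply: hs; exact: U0_small zU.
have h3 : (#|U0 M|)%:R <= (#|S0 M|)%:R :> R by rewrite ler_nat; exact: card_U0.
have h4 := S0_nonempty hM.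
have h5 : (1 : R) <= (#|S0 M|)%:R.
  by rewrite ler1n.
have h6 := ler_wpM2l c0 h3.
have h7 : (a1 - c) * 1 <= (a1 - c) * (#|S0 M|)%:R by apply: ler_wpM2l => //; lra.
rewrite mulrBl mulr1 in h7.
lra.
Qed.

End W2.


Lemma x_in_M1 (M : {set Sigma}) : x \in M1 M.
Proof. by rewrite in_M1 eqxx orbT. Qed.

Section W3.
Variable R : realType.
Variable w : Sigma -> R.

Lemma minH_attained (b : bool) :
  (exists M, is_matching M && ((x \in M) == b)) ->
  exists M, [/\ is_matching M, (x \in M) = b, minH x b w = Hw w M &
     forall M', is_matching M' -> (x \in M') = b -> Hw w M <= Hw w M'].
Proof.
move=> [M0 hM0].
have [M hM e] := @eq_bigmin _ _ {set Sigma} (+oo)%E M0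
  (fun M => is_matching M && ((x \in M) == b)) (fun M => (Hw w M)%:E) hM0
  (fun _ _ => leey _).
move: hM; rewrite unfold_in => /andP [mM /eqP xM].
exists M; split => //; first by rewrite /minH e.
move=> M' mM' xM'.
have := @bigmin_le_cond _ _ {set Sigma} (+oo)%E M'
  (fun M => is_matching M && ((x \in M) == b)) (fun M => (Hw w M)%:E).
rewrite mM' xM' eqxx => /(_ isT); rewrite e lee_fin; exact.
Qed.

Lemma K_lb (a1 c : R) :
  (exists M, is_matching M && (x \notin M)) ->
  (forall y, y != x -> touches y -> a1 <= w y) ->
  (forall y, small y -> w y <= c) -> 0 <= c -> 2 * c <= a1 ->
  c <= Ktrans x w.
Proof.
move=> [M0 hM0] hl hs c0 ca.
have [M [mM xM e0 _]] : exists M, [/\ is_matching M, (x \in M) = false, minH x false w = Hw w M &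
     forall M', is_matching M' -> (x \in M') = false -> Hw w M <= Hw w M'].
  apply: minH_attained; exists M0; move: hM0 => /andP [-> /negbTE ->] //.
have [M' [_ _ e1 hmin]] : exists M, [/\ is_matching M, (x \in M) = true, minH x true w = Hw w M &
     forall M', is_matching M' -> (x \in M') = true -> Hw w M <= Hw w M'].
  by apply: minH_attained; exists (M1 M); rewrite M1_matching ?xM // x_in_M1.
have xM' : x \notin M by rewrite xM.
have h1 := hmin _ (M1_matching mM xM') (x_in_M1 M).
rewrite Hw_M1 // in h1.
have h2 := gain (w:=w) mM xM' hl hs c0 ca.
rewrite /Ktrans e0 e1; lra.
Qed.
End W3.


Definition Me (e : Sigma) : {set Sigma} := (e |: [set sing z | z in ~: val e])%SET.

Lemma Me_matching e : is_matching (Me e).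
Proof.
apply/forallP => z; apply/cards1P.
have [ze|ze] := boolP (z \in val e).
  exists e; apply/setP => y; rewrite !inE.
  apply/idP/idP => [/andP [/orP [//|/imsetP [u]]]|/eqP -> ]; last by rewrite eqxx ze.
  by rewrite inE => ue -> ; rewrite sing_val inE => /eqP ez; move: ue; rewrite -ez ze.
exists (sing z); apply/setP => y; rewrite !inE.
apply/idP/idP => [/andP [/orP [/eqP -> |/imsetP [u]]]|/eqP -> ].
- by rewrite (negbTE ze).
- by rewrite inE => ue -> ; rewrite sing_val inE => /eqP ->.
- rewrite sing_val set11 andbT; apply/orP; right; apply/imsetP; exists z => //.
  by rewrite inE.
Qed.

End Comb.

Section Exist.
Variables (n d : nat).
Local Notation vtx := (vtx n d).
Local Notation Sigma := (Sigma n d).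
Local Close Scope classical_set_scope.
Hypothesis hn : (1 < n)%N.
Hypothesis hd : (0 < d)%N.

Definition inc (k : 'I_n) : 'I_n := Ordinal (ltn_pmod k.+1 (ltnW hn)).
Definition i0 : 'I_d := Ordinal hd.
Definition incv (v : vtx) : vtx := [ffun j => if j == i0 then inc (v j) else v j].

Lemma adjb_incv v : adjb v (incv v).
Proof.
apply/existsP; exists i0; apply/andP; split.
  by rewrite ffunE eqxx /= eqxx.
apply/forallP => j; rewrite ffunE; case: ifP => [/eqP ->|_]; by rewrite ?eqxx ?implybT.
Qed.

Lemma incv_neq v : v != incv v.
Proof.
apply/eqP => /(congr1 (fun f : vtx => val (f i0))); rewrite ffunE eqxx /=.
have := ltn_ord (v i0); set k := val (v i0) => hk.
case: (ltnP k.+1 n) => h.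
  by rewrite modn_small // => /eqP; rewrite eqn_leq ltnn andbF.
have kn : k.+1 = n by apply/eqP; rewrite eqn_leq h hk.
by rewrite kn modnn => k0; move: hn; rewrite -kn k0.
Qed.

Definition edge_proof v : site_or_edge [set v; incv v]%SET.
Proof.
apply/orP; right; apply/existsP; exists v; apply/existsP; exists (incv v).
by rewrite eqxx adjb_incv.
Qed.

Definition edge v : Sigma := exist (fun A => is_true (site_or_edge A)) [set v; incv v]%SET (edge_proof v).

Lemma exists_M0 (x : Sigma) : exists M, is_matching M && (x \notin M).
Proof.
have [c1|c1] := boolP (#|val x| == 1%N).
  move/cards1P: (c1) => [v ev].
  exists (Me (edge v)); rewrite Me_matching /= !inE; apply/negP => /orP [/eqP ex|].
    move: c1; rewrite ex /= cards2 incv_neq //.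
  move=> /imsetP [z]; rewrite inE => zn ex; move: zn.
  have : val x = val (sing z) by rewrite ex.
  rewrite ev sing_val => /set1_inj <-; rewrite /= !inE eqxx //.
have := site_card x; case/andP => /card_gt0P [a ax] _.
exists (Me (sing a)); rewrite Me_matching /= !inE; apply/negP => /orP [/eqP ex|].
  by move: c1; rewrite ex sing_val cards1.
move=> /imsetP [z _ ex]; by move: c1; rewrite ex sing_val cards1.
Qed.

End Exist.

Section Count.
Variables (n d : nat).
Local Notation vtx := (vtx n d).
Local Notation Sigma := (Sigma n d).
Local Close Scope classical_set_scope.

Definition cond (a w : vtx) (ib : 'I_d * bool) :=
  (if ib.2 then (val (w ib.1) == (val (a ib.1)).+1 %% n)%N
   else (val (a ib.1) == (val (w ib.1)).+1 %% n)%N)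
  && [forall j, (j != ib.1) ==> (a j == w j)].

Lemma succ_mod_inj (k k' : 'I_n) : (k.+1 %% n = k'.+1 %% n)%N -> val k = val k'.
Proof.
move=> /eqP; rewrite -(addn1 k) -(addn1 k') eqn_modDr !modn_small //; exact: eqP.
Qed.

Lemma cond_inj a w w' ib : cond a w ib -> cond a w' ib -> w = w'.
Proof.
case: ib => i b; rewrite /cond /= => /andP [h1 /forallP h2] /andP [h1' /forallP h2'].
apply/ffunP => j; have [->|ji] := eqVneq j i.
  apply: val_inj; case: b h1 h1' => /eqP e1 /eqP e2.
    exact: (etrans e1 (esym e2)).
  have := etrans (esym e1) e2; exact: succ_mod_inj.
move: (h2 j) (h2' j); rewrite ji /= => /eqP <- /eqP <- //.
Qed.

Lemma nbr_card (a : vtx) : (#|[set w | adjb a w]| <= (2 * d).+1)%N.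
Proof.
have -> : (2 * d).+1 = #|{: option ('I_d * bool)}| by rewrite card_option card_prod card_ord card_bool mulnC.
apply: (leq_card_in (fun w => [pick ib | cond a w ib])) => w w'.
rewrite !inE => /existsP [i /andP [ho h]] /existsP [i2 /andP [ho2 h2]].
case: pickP => [ib hib|]; last first.
  by move=> /(_ (i, ~~ (val (a i) == (val (w i)).+1 %% n)%N)); rewrite /cond /= h andbT; case/orP: ho => ->; rewrite ?orbT //=; case: (_ == _).
case: pickP => [ib' hib' [e]|]; last by [].
by rewrite e in hib; exact: cond_inj hib hib'.
Qed.


Variable x : Sigma.
Definition Nx := (val x :|: \bigcup_(a in val x) [set w | adjb a w])%SET.

Lemma touch_sub (y : Sigma) : touches x y -> (val y \subset Nx)%SET.
Proof.
move=> /touchesP [a ay ax]; apply/fintype.subsetP => z zy.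
rewrite /Nx !inE; have [//|zx] := boolP (z \in val x).
apply/bigcupP; exists a => //; rewrite inE.
move: ay zy; case: y => A /= /orP [/cards1P [b ->]|/existsP [u /existsP [v /andP [/eqP -> uv]]]].
  by rewrite !inE => /eqP ea /eqP ez; move: zx; rewrite ez -ea ax.
rewrite !inE => /orP [] /eqP ea /orP [] /eqP ez.
- by move: zx; rewrite ez -ea ax.
- by rewrite ea ez.
- by rewrite ea ez adjb_sym.
- by move: zx; rewrite ez -ea ax.
Qed.

Lemma small_sub (y : Sigma) : small x y -> (val y \subset Nx)%SET.
Proof.
rewrite /small => /and3P [_ _ /existsP [s /and3P [_ ts ys]]].
exact: fintype.subset_trans ys (touch_sub ts).
Qed.

Lemma C_card : (#|[set y : Sigma | touches x y || small x y]| <= 2 ^ (4 * d + 4))%N.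
Proof.
rewrite -(card_imset _ val_inj).
apply: (@leq_trans #|powerset Nx|).
  apply: subset_leq_card; apply/fintype.subsetP => A /imsetP [y].
  rewrite inE => /orP [h|h] ->; rewrite powersetE; [exact: touch_sub|exact: small_sub].
rewrite card_powerset; apply: leq_pexp2l => //.
apply: leq_trans (leq_card_setU _ _) _.
have h1 := site_card x; case/andP: h1 => _ h1.
apply: (@leq_trans (2 + 2 * (2 * d).+1)); last by lia.
apply: leq_add => //.
apply: leq_trans (card_bigcup_le _ _) _.
apply: (@leq_trans (\sum_(a in val x) (2 * d).+1)).
  by apply: leq_sum => a _; exact: nbr_card.
by rewrite sum_nat_const leq_mul2r h1 orbT.
Qed.

End Count.


Lemma density_lb (R : realType) (beta : \bar R) (alpha : R) (p : R -> R) :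
  good_density beta alpha p -> forall L : R, exists a b eps : R,
  [/\ L <= a, a < b, 0 < eps &
   (eps%:E <= \int[@lebesgue_measure R]_(x in `]a, b[) (p x)%:E)%E].
Proof.
move=> [hb [p0 [_ [ppos [pc _]]]]] L.
have [x0 [Lx0 bx0]] : exists x0, L < x0 /\ (beta < x0%:E)%E.
  case: beta hb {ppos pc} => [r| |] //= _.
    exists (Num.max L r + 1); split.
      by rewrite (@le_lt_trans _ _ (Num.max L r)) ?le_max ?lexx // ltrDl.
    by rewrite lte_fin (@le_lt_trans _ _ (Num.max L r)) ?le_max ?lexx ?orbT // ltrDl.
  by exists (L + 1); split; rewrite ?ltrDl ?ltNye.
set I := `]x0, x0 + 1[.
have ID : [set` I] `<=` [set x : R | (beta < x%:E)%E].
  move=> y; rewrite /= in_itv /= => /andP [h _].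
  by apply: (lt_trans bx0); rewrite lte_fin.
have cI : {in [set` I], continuous p}.
  rewrite -continuous_open_subspace; last exact: interval_open.
  exact: continuous_subspaceW ID pc.
set m := x0 + 1 / 2.
have mI : m \in [set` I].
  by rewrite inE /= in_itv /= /m; apply/andP; split; lra.
have pm : 0 < p m by apply: ppos; apply: ID; rewrite -inE.
have hlt : p m / 2 < p m by lra.
have hnear : \forall t \near m, p m / 2 < p t.
  exact: (@cvgr_gt R R (nbhs m) _ p (p m) (cI m mI) (p m / 2) hlt).
have := nbhs_ballP m [set t | p m / 2 < p t].
case => /(_ hnear) [e e0 he] _.
set e' := Num.min e (1 / 2).
have e'0 : 0 < e' by rewrite lt_min e0 /=; lra.
have e'e : e' <= e by rewrite ge_min lexx.
have e'h : e' <= 1 / 2 by rewrite ge_min lexx orbT.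
exists m, (m + e'), (p m / 2 * e'); split.
- rewrite /m; lra.
- lra.
- by apply: mulr_gt0 => //; lra.
have JD : [set` `]m, m + e'[] `<=` [set x : R | (beta < x%:E)%E].
  move=> y; rewrite /= in_itv /= => /andP [h1 h2]; apply: ID.
  by rewrite /= in_itv /=; apply/andP; split; rewrite /m in h1 h2 *; lra.
have mJ : measurable_fun `]m, m + e'[ p.
  apply: measurable_realfun.subspace_continuous_measurable_fun => //.
  exact: continuous_subspaceW JD pc.
have hc : (\int[@lebesgue_measure R]_(x in `]m, (m + e')%R[) (cst (p m / 2)%:E) x)%E = (p m / 2 * e')%:E.
  rewrite integral_cst //= lebesgue_measure_itv /= lte_fin ltrDl e'0 /=.
  by rewrite -EFinD -EFinM addrAC subrr add0r.
rewrite -hc.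
apply: ge0_le_integral => //.
- by move=> y _; rewrite lee_fin; lra.
- by apply/measurable_realfun.measurable_EFinP.
move=> y; rewrite /= in_itv /= => /andP [h1 h2]; rewrite lee_fin.
have : ball m e y.
  rewrite -ball_normE /ball_ /= ler0_norm; first by lra.
  lra.
by move/he => /= h; lra.
Qed.


Lemma prod_lb (R : realType) (I : finType) (f : I -> R) (c : pred I) (q : R) (k : nat) :
  0 <= q -> q <= 1 -> (forall i, c i -> q <= f i) -> (forall i, ~~ c i -> f i = 1) ->
  (#|[set i | c i]%SET| <= k)%N -> q ^+ k <= \prod_i f i.
Proof.
move=> q0 q1 hc hn hk.
rewrite (bigID c) /= [X in _ * X]big1 ?mulr1; last by move=> i /hn.
apply: (@le_trans _ _ (\prod_(i | c i) q)).
  rewrite prodr_const; apply: ler_wiXn2l => //.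
  by apply: leq_trans _ hk; rewrite cardsE.
by apply: ler_prod => i ci; rewrite q0 hc.
Qed.

Section Meas.
Variables (d : measure_display) (T : measurableType d) (R : realType).

Lemma meas_bigmin (I : Type) (r : seq I) (Pr : pred I) (F : I -> T -> \bar R) :
  (forall i, measurable_fun setT (F i)) ->
  measurable_fun setT (fun w => \big[Order.min/+oo%E]_(i <- r | Pr i) F i w).
Proof.
move=> hF; elim: r => [|i r IH].
  under eq_fun do rewrite big_nil; exact: measurable_cst.
under eq_fun do rewrite big_cons.
case: (Pr i) => //; exact: measurable_mine.
Qed.

Lemma meas_sum (I : Type) (r : seq I) (Pr : pred I) (F : I -> T -> R) :
  (forall i, measurable_fun setT (F i)) ->
  measurable_fun setT (fun w => \sum_(i <- r | Pr i) F i w).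
Proof.
move=> hF; elim: r => [|i r IH].
  under eq_fun do rewrite big_nil; exact: measurable_cst.
under eq_fun do rewrite big_cons.
case: (Pr i) => //; exact: measurable_funD.
Qed.
End Meas.

Lemma fac_lb (R : realType) (dT : measure_display) (T : measurableType dT)
  (P : probability T R) (Y : T -> R) (p : R -> R) (a b e : R) :
  measurable_fun setT Y ->
  (forall B : set R, measurable B -> P (Y @^-1` B) = (\int[@lebesgue_measure R]_(x in B) (p x)%:E)%E) ->
  (e%:E <= \int[@lebesgue_measure R]_(x in `]a, b[) (p x)%:E)%E ->
  e <= fine (P (Y @^-1` `]a, b[)).
Proof.
move=> mY hY he.
have hm : measurable (Y @^-1` `]a, b[).
  by have := mY measurableT _ (measurable_itv `]a, b[); rewrite setTI.
by rewrite -lee_fin fineK ?(fin_num_measure P _ hm) // hY //; exact: measurable_itv.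
Qed.

Lemma fine_P_le1 (R : realType) (dT : measure_display) (T : measurableType dT)
  (P : probability T R) (A : set T) : measurable A -> 0 <= fine (P A) <= 1.
Proof.
move=> mA; rewrite fine_ge0 ?measure_ge0 //=.
by rewrite -lee_fin fineK ?(fin_num_measure P _ mA) // probability_le1.
Qed.

Unset Implicit Arguments.
Set Strict Implicit.

Theorem lemma6p2 (R : realType) (d : nat) (beta : \bar R) (alpha delta : R) (p : R -> R) :
  (2 <= d)%N -> good_density beta alpha p -> 0 < delta ->
  exists c1 : R, 0 < c1 /\
    forall (n : nat), (3 <= n)%N ->
    forall (x : Sigma n d) (dT : measure_display) (T : measurableType dT)
      (P : probability T R) (J : Sigma n d -> {RV P >-> R}) (J' : {RV P >-> R}),
      (forall y, has_density P (J y) p) ->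
      has_density P J' p ->
      mutually_independent P (fun i : option (Sigma n d) =>
         match i with Some y => (J y : T -> R) | None => (J' : T -> R) end) ->
      (forall y, ('E_P[fun w => (`|J y w| `^ (4 + delta))%R] < +oo)%E) ->
      (c1%:E < P [set w | (Num.max (J x w) (J' w) < Ktrans x (fun y => J y w))%R])%E.
Proof.
move=> hd2 hgood hdelta.
have [a0 [b0 [e0 [_ ab0 e00 hi0]]]] := density_lb hgood 0.
have [a1 [b1 [e1 [La1 ab1 e10 hi1]]]] := density_lb hgood (2 * `|b0|).
set q := Num.min (Num.min e0 e1) 1.
have q0 : 0 < q by rewrite !lt_min e00 e10 ltr01.
have q1 : q <= 1 by rewrite ge_min lexx orbT.
have qe0 : q <= e0 by rewrite !ge_min lexx.
have qe1 : q <= e1 by rewrite !ge_min lexx orbT.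
set K := (2 ^ (4 * d + 4)).+1.
exists (q ^+ K / 2); split; first by rewrite divr_gt0 // exprn_gt0.
move=> n hn x dT T P J J' hJ hJ' hind _.
have hn1 : (1 < n)%N by apply: leq_trans hn.
have hd1 : (0 < d)%N by apply: leq_trans hd2.
set X := (fun i : option (Sigma n d) => match i with Some y => (J y : T -> R) | None => (J' : T -> R) end) in hind.
pose I0 : set R := [set` `]a0, b0[].
pose I1 : set R := [set` `]a1, b1[].
pose B (i : option (Sigma n d)) : set R := match i with
  | None => I0
  | Some y => if y == x then I0 else if touches x y then I1 else if small x y then I0 else setT end.
have mB : forall i, measurable (B i).
  by case => [y|] /=; repeat case: ifP => _; rewrite /I0 /I1 //; exact: measurable_itv.
have hE := hind B mB.
set E := \bigcap_(i in [set: option (Sigma n d)]) (X i @^-1` B i) in hE.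
have mX : forall i, measurable_fun setT (X i) by case => [y|] /=; exact: measurable_funPT.
have mXB : forall i, measurable (X i @^-1` B i).
  by move=> i; have := mX i measurableT _ (mB i); rewrite setTI.
have mE : measurable E.
  by apply: fin_bigcap_measurable; [exact: finite_finset|move=> i _; exact: mXB].
pose c (i : option (Sigma n d)) := match i with None => true | Some y => touches x y || small x y end.
have hprod : q ^+ K <= \prod_i fine (P (X i @^-1` B i)).
  apply: (prod_lb (c := c)) => //; first exact: ltW.
  - case => [y|] /= cy; last by apply: le_trans qe0 _; apply: fac_lb (mX None) hJ' hi0.
    case: ifP => [/eqP ->|nx]; first by apply: le_trans qe0 _; apply: fac_lb (mX (Some x)) (hJ x) hi0.
    case: ifP => ty; first by apply: le_trans qe1 _; apply: fac_lb (mX (Some y)) (hJ y) hi1.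
    rewrite ty /= in cy; rewrite cy.
    by apply: le_trans qe0 _; apply: fac_lb (mX (Some y)) (hJ y) hi0.
  - case => [y|] //= /norP [ty sy].
    have nx : (y == x) = false.
      by apply/negbTE; apply/eqP => e; move: ty; rewrite e touches_x.
    by rewrite nx (negbTE ty) (negbTE sy) preimage_setT probability_setT.
  - apply: (@leq_trans #|(None |: (Some @: [set y | touches x y || small x y]))%SET|).
      apply: subset_leq_card; apply/fintype.subsetP => -[y|]; rewrite !inE //= => cy.
      by apply/imsetP; exists y => //; rewrite inE.
    rewrite cardsU1 card_imset; last by move=> u v [].
    apply: (@leq_trans (1 + #|[set y | touches x y || small x y]%SET|)); first by rewrite leq_add2r leq_b1.
    by rewrite add1n ltnS; exact: C_card.
have PE : ((q ^+ K)%:E <= P E)%E.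
  by rewrite -(fineK (fin_num_measure P _ mE)) lee_fin hE.
pose S := [set w | (Num.max (J x w) (J' w) < Ktrans x (fun y => J y w))%R].
have mK : measurable_fun setT (fun w => Ktrans x (fun y => J y w)).
  rewrite /Ktrans; apply: measurable_funD; last exact: measurable_funPT.
  apply: measurable_funB; rewrite /minH;
    (apply: measurableT_comp; first exact: fine_measurable);
    apply: meas_bigmin => M; apply/measurable_EFinP; rewrite /Hw;
    apply: meas_sum => y; exact: measurable_funPT.
have mS : measurable S.
  have h := measurable_fun_ltr (measurable_maxr (mX (Some x)) (mX None)) mK.
  by have := h measurableT [set true] I; rewrite setTI.
have ES : E `<=` S.
  move=> w hw; have hw' : forall i, B i (X i w) by move=> i; exact: (hw i I).
  have hJ'w := hw' None; have hJxw := hw' (Some x).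
  rewrite /= eqxx /I0 /= in_itv /= in hJxw.
  rewrite /= /I0 /= in_itv /= in hJ'w.
  have hl : forall y, y != x -> touches x y -> a1 <= J y w.
    move=> y nx ty; have := hw' (Some y); rewrite /= (negbTE nx) ty /I1 /= in_itv /=.
    by case/andP => h _; exact: ltW.
  have hs : forall y, small x y -> J y w <= `|b0|.
    move=> y sy; have := hw' (Some y); case/and3P: (sy) => nx nt _.
    rewrite /= (negbTE nx) (negbTE nt) sy /I0 /= in_itv /= => /andP [_ h].
    by apply: le_trans (ltW h) _; exact: ler_norm.
  have := K_lb (w := fun y => J y w) (exists_M0 hn1 hd1 x) hl hs (normr_ge0 _) La1.
  rewrite /S /= gt_max => hK.
  case/andP: hJxw => _ h1; case/andP: hJ'w => _ h2.
  have := ler_norm b0.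
  move=> hb; apply/andP; split; lra.
apply: (@lt_le_trans _ _ (q ^+ K)%:E).
  by rewrite lte_fin ltr_pdivrMr // ltr_pMr ?exprn_gt0 // ltr1n.
apply: (le_trans PE); exact: le_measure (mem_set mE) (mem_set mS) ES.
Qed.
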